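(* Let $\Delta_1,\Delta_2$ be simplicial complexes on $[n]$ and let $A,A',B$ be nonempty subsets of $[n]$ such that $A\cap B=A'\cap B=\emptyset$ and neither $A$ nor $A'$ meets the vertex set of $\Delta_1\cup\Delta_2$. Then $$\tilde H_i\big((A*\Delta_1)\cup(B*\Delta_2);\mathbb{K}\big)\cong\tilde H_i\big((A'*\Delta_1)\cup(B*\Delta_2);\mathbb{K}\big)\quad\text{for all } i>0.$$
   Context: A simplicial complex on $[n]$ is a finite family of subsets of $[n]$ closed under taking subsets (singletons need not belong to it); its vertex set is the union of its faces. For a nonempty $A\subseteq[n]$ and a simplicial complex $\Delta$ on $[n]$, the cone $A*\Delta$ is the simplicial complex whose facets are the sets $A\cup F$ with $F$ a facet of $\Delta$. $\tilde H_i(\,\cdot\,;\mathbb{K})$ denotes reduced simplicial homology with coefficients in the field $\mathbb{K}$. *)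

(* Defs.v *)
From HB Require Import structures.
From mathcomp Require Import all_boot all_order all_algebra.
Set Implicit Arguments.
Unset Strict Implicit.
Unset Printing Implicit Defensive.
Import GRing.Theory.
Local Open Scope ring_scope.

Section SimplicialComplexes.
Variable n : nat.

Definition is_complex (D : {set {set 'I_n}}) : Prop :=
  forall F G : {set 'I_n}, F \in D -> G \subset F -> G \in D.

Definition vertex_set (D : {set {set 'I_n}}) : {set 'I_n} :=
  \bigcup_(F in D) F.

Definition facets (D : {set {set 'I_n}}) : {set {set 'I_n}} :=
  [set F in D | [forall G in D, (F \subset G) ==> (G == F)]].

Definition cone (A : {set 'I_n}) (D : {set {set 'I_n}}) : {set {set 'I_n}} :=
  [set S : {set 'I_n} | [exists F in facets D, S \subset A :|: F]].

(* faces with exactly k vertices (dimension k-1); the empty face has k = 0 *)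
Definition faces (D : {set {set 'I_n}}) (k : nat) : {set {set 'I_n}} :=
  [set F in D | #|F| == k].

Variable K : fieldType.

(* coefficient of G in the boundary of F: if F = G + {v}, the sign
   (-1)^(number of vertices of F smaller than v), vertices ordered as in [n] *)
Definition bd_coef (F G : {set 'I_n}) : K :=
  if (G \subset F) && (#|F| == #|G|.+1)%N then
    \sum_(v in F :\: G) (-1) ^+ #|[set u in F | (u < v)%N]|
  else 0.

(* matrix of the augmented simplicial boundary map
   C_k (faces with k+1 vertices) -> C_{k-1} (faces with k vertices),
   acting on row vectors *)
Definition bdmx (D : {set {set 'I_n}}) (k : nat) :
  'M[K]_(#|faces D k.+1|, #|faces D k|) :=
  \matrix_(i, j) bd_coef (enum_val i) (enum_val j).

(* dimension over K of the reduced homology H~_i(D; K):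
   dim ker d_i - dim im d_{i+1} *)
Definition red_betti (D : {set {set 'I_n}}) (i : nat) : nat :=
  (\rank (kermx (bdmx D i)) - \rank (bdmx D i.+1))%N.

End SimplicialComplexes.

(* Main.v *)
Require Import Defs.
From HB Require Import structures.
From mathcomp Require Import all_boot all_order all_algebra.
From mathcomp Require Import zify.
Set Implicit Arguments.
Unset Strict Implicit.
Unset Printing Implicit Defensive.
Import GRing.Theory.
Local Open Scope ring_scope.

Section Bd.
Variable n : nat.
Variable K : fieldType.
Implicit Types F G H : {set 'I_n}.

Definition sgn F (v : 'I_n) : K := (-1) ^+ #|[set u in F | (u < v)%N]|.

Lemma bd_nz F G : bd_coef K F G != 0 -> (G \subset F) /\ #|F| = #|G|.+1.
Proof.
rewrite /bd_coef; case: ifP => [/andP[-> /eqP ->] //|]; by rewrite eqxx.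
Qed.

Lemma bdE F G : bd_coef K F G = \sum_(v in F) (G == F :\ v)%:R * sgn F v.
Proof.
rewrite /bd_coef; case: ifP => [/andP[sGF /eqP cF] | h].
  have : #|F :\: G| == 1%N.
    by rewrite cardsD (setIidPr sGF) cF subSnn.
  case/cards1P => v0 Hv0.
  have v0F : v0 \in F by have := set11 v0; rewrite -Hv0 inE => /andP[].
  have v0G : v0 \notin G by have := set11 v0; rewrite -Hv0 inE => /andP[].
  have GE : G = F :\ v0.
    apply/setP => x; rewrite !inE; apply/idP/idP.
      move=> xG; rewrite (subsetP sGF _ xG) andbT; apply/eqP => ex1.
      by move: v0G; rewrite -ex1 xG.
    case/andP => xv xF; apply/negPn/negP => xG.
    have : x \in F :\: G by rewrite inE xG xF.
    by rewrite Hv0 inE (negbTE xv).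
  rewrite Hv0 big_set1 (bigD1 v0) //= -GE eqxx mul1r big1 ?addr0 //.
  move=> v /andP[vF vv0]; rewrite GE.
  case: eqP => [e|]; last by rewrite mul0r.
  have : v0 \in F :\ v by rewrite !inE v0F andbT; apply/eqP => e1; rewrite e1 eqxx in vv0.
  by rewrite -e !inE eqxx.
rewrite big1 // => v vF; case: eqP => [e|]; last by rewrite mul0r.
move: h; rewrite e subsetDl /= (cardsD1 v F) vF; by rewrite eqxx.
Qed.

Lemma bd_sgn F v : v \in F -> bd_coef K F (F :\ v) = sgn F v.
Proof.
move=> vF; rewrite bdE (bigD1 v) //= eqxx mul1r big1 ?addr0 // => w /andP[wF wv].
case: eqP => [e|]; last by rewrite mul0r.
have : w \in F :\ v by rewrite !inE wv wF.
by rewrite e !inE eqxx.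
Qed.

Lemma sgn_sq F v : sgn F v * sgn F v = 1.
Proof. by rewrite /sgn -exprD addnn -mul2n exprM expr2 mulN1r opprK expr1n. Qed.

Lemma sum_pred1 (T : finType) (x0 : T) (f : T -> K) :
  \sum_(x : T) (x == x0)%:R * f x = f x0.
Proof.
rewrite (bigD1 x0) //= eqxx mul1r big1 ?addr0 // => x /negbTE ->; by rewrite mul0r.
Qed.

Lemma sgnD F (v w : 'I_n) : v \in F -> (v < w)%N ->
  sgn F w = - sgn (F :\ v) w.
Proof.
move=> vF vw; rewrite /sgn.
have -> : [set u in F | (u < w)%N] = v |: [set u in F :\ v | (u < w)%N].
  apply/setP => x; rewrite !inE; case: eqP => [->|] //=; by rewrite vF vw.
rewrite cardsU1 !inE eqxx /= exprS mulN1r //.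
Qed.

Lemma sgnD' F (v w : 'I_n) : (v < w)%N -> sgn (F :\ w) v = sgn F v.
Proof.
move=> vw; rewrite /sgn; congr (_ ^+ _); apply: eq_card => x; rewrite !inE.
case: eqP => [->|] //=; rewrite ltnNge ltnW ?andbF //.
Qed.

Lemma dd0 F H : \sum_(G : {set 'I_n}) bd_coef K F G * bd_coef K G H = 0.
Proof.
under eq_bigr do rewrite bdE big_distrl /=.
rewrite exchange_big /=.
under eq_bigr => v vF do (under eq_bigr do rewrite -mulrA; rewrite (sum_pred1 (F :\ v) (fun G => sgn F v * bd_coef K G H)) bdE big_distrr /=).
pose g v w : K := if (v \in F) && (w \in F) then
   (H == F :\ v :\ w)%:R * sgn F v * sgn (F :\ v) w else 0.
transitivity (\sum_v \sum_w (if w != v then g v w else 0)).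
  rewrite [RHS](bigID (fun v => v \in F)) /= [X in _ + X]big1 ?addr0; last first.
    by move=> v vF; rewrite big1 // => w _; rewrite /g (negbTE vF); case: ifP.
  apply: eq_bigr => v vF; rewrite [RHS](bigID (fun w => w \in F :\ v)) /=.
  rewrite [X in _ + X]big1 ?addr0; last first.
    move=> w; rewrite !inE negb_and negbK => /orP[/eqP ->|/negbTE wF].
      by rewrite eqxx.
    by rewrite /g wF andbF; case: ifP.
  apply: eq_bigr => w; rewrite !inE => /andP[wv wF].
  by rewrite wv /g vF wF /= mulrCA mulrA.
transitivity (\sum_(v : 'I_n) \sum_(w : 'I_n) ((if (v < w)%N then g v w else 0) +
                             (if (w < v)%N then g v w else 0))).
  apply: eq_bigr => v _; apply: eq_bigr => w _.
  case: ltngtP => [|| /val_inj ->]; rewrite ?eqxx ?addr0 ?add0r //.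
    by move=> h; rewrite ifT // neq_ltn h orbT.
  by move=> h; rewrite ifT // neq_ltn h.
under eq_bigr do rewrite big_split /=.
rewrite big_split /= [X in _ + X]exchange_big /= -big_split /=.
apply: big1 => v _; rewrite -big_split /=; apply: big1 => w _.
case: ifP => [vw|]; last by rewrite addr0.
rewrite /g; case: (boolP (v \in F)) => vF; case: (boolP (w \in F)) => wF //=; 
  rewrite ?addr0 //.
rewrite setDDl setUC -setDDl (sgnD vF vw) (sgnD' F vw).
have -> : sgn (F :\ v) w = - sgn F w.
  by rewrite (sgnD vF vw) opprK.
by rewrite opprK mulrN -!mulrA [sgn F w * _]mulrC addNr.
Qed.


Definition dd : 'M[K]_(#|{set 'I_n}|) :=
  \matrix_(i, j) bd_coef K (enum_val i) (enum_val j).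
Definition rowF G := row (enum_rank G) dd.
Definition RS (S : {set {set 'I_n}}) : 'M[K]_(#|S|, #|{set 'I_n}|) :=
  \matrix_(i < #|S|) rowF (enum_val i).

Lemma rowFE G j : rowF G 0 j = bd_coef K G (enum_val j).
Proof. by rewrite /rowF mxE mxE enum_rankK. Qed.

Lemma RS_row (S : {set {set 'I_n}}) G : G \in S -> (rowF G <= RS S)%MS.
Proof.
move=> GS; apply: (eq_row_sub (enum_rank_in GS G)).
by rewrite rowK enum_rankK_in.
Qed.

Lemma RS_sub (S : {set {set 'I_n}}) m (M : 'M[K]_(m, #|{set 'I_n}|)) :
  (forall G, G \in S -> (rowF G <= M)%MS) -> (RS S <= M)%MS.
Proof. by move=> h; apply/row_subP => i; rewrite rowK; apply: h; apply: enum_valP. Qed.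

Lemma sum_pred1' m (r : 'I_m) (f : 'I_m -> K) :
  \sum_(x : 'I_m) (x == r)%:R * f x = f r.
Proof. exact: sum_pred1. Qed.

Lemma sum_ev (f : {set 'I_n} -> K) G :
  \sum_(i0 : 'I_#|{set 'I_n}|) f (enum_val i0) * (enum_val i0 == G)%:R = f G.
Proof.
rewrite (bigD1 (enum_rank G)) //= enum_rankK eqxx mulr1 big1 ?addr0 // => x xne.
case: eqP => [e|]; last by rewrite mulr0.
by move: xne; rewrite -e enum_valK eqxx.
Qed.

Lemma rank_bdmx D k : is_complex D ->
  \rank (bdmx K D k) = \rank (RS (faces D k.+1)).
Proof.
move=> cD.
pose Q : 'M[K]_(#|faces D k|, #|{set 'I_n}|) :=
  \matrix_(j, j') (enum_val j' == enum_val j)%:R.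
have E1 : bdmx K D k *m Q = RS (faces D k.+1).
  apply/matrixP => i j'; rewrite !mxE.
  rewrite enum_rankK.
  under eq_bigr do rewrite !mxE.
  rewrite -(big_enum_val (fun G => bd_coef K (enum_val i) G * (enum_val j' == G)%:R)) /=.
  case: (boolP (enum_val j' \in faces D k)) => Hj.
    rewrite (bigD1 (enum_val j')) //= eqxx mulr1 big1 ?addr0 // => G /andP[_ /negbTE].
    by rewrite eq_sym => ->; rewrite mulr0.
  rewrite big1; last first.
    move=> G GS; case: eqP => [e|_]; last by rewrite mulr0.
    by move: Hj; rewrite e GS.
  apply/esym/eqP; apply: contraNT Hj => /bd_nz [sub card].
  have : enum_val i \in faces D k.+1 := enum_valP i.
  rewrite !inE => /andP[FD /eqP cF]; rewrite (cD _ _ FD sub) /=.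
  by move: cF; rewrite card => -[->].
have E2 : RS (faces D k.+1) *m Q^T = bdmx K D k.
  apply/matrixP => i j; rewrite !mxE.
  under eq_bigr do rewrite !mxE.
  by rewrite enum_rankK (sum_ev (fun G => bd_coef K (enum_val i) G)).
apply/eqP; rewrite eqn_leq; apply/andP; split; [rewrite -{1}E2 | rewrite -{1}E1]; exact: mxrankM_maxl.
Qed.

Definition beta (D : {set {set 'I_n}}) (i : nat) : nat :=
  ((#|faces D i.+1| - \rank (RS (faces D i.+1))) - \rank (RS (faces D i.+2)))%N.

Lemma betti_eq D i : is_complex D -> red_betti K D i = beta D i.
Proof.
move=> cD; rewrite /red_betti mxrank_ker !rank_bdmx //.
Qed.


Lemma sum_enum (f : {set 'I_n} -> 'rV[K]_(#|{set 'I_n}|)) :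
  \sum_(j : 'I_#|{set 'I_n}|) f (enum_val j) = \sum_G f G.
Proof.
rewrite [RHS](reindex (fun j : 'I_#|{set 'I_n}| => enum_val j)) //; exists enum_rank => x _;
  [exact: enum_valK | exact: enum_rankK].
Qed.

Lemma rowF_dd F : rowF F *m dd = 0.
Proof.
apply/matrixP => i j; rewrite !mxE.
under eq_bigr do rewrite !mxE enum_rankK.
rewrite -[RHS](dd0 F (enum_val j)) [RHS](reindex (fun j : 'I_#|{set 'I_n}| => enum_val j)) //=.
by exists enum_rank => x _; [exact: enum_valK | exact: enum_rankK].
Qed.

Lemma rowF_sum F : \sum_G bd_coef K F G *: rowF G = 0.
Proof.
rewrite -(sum_enum (fun G => bd_coef K F G *: rowF G)) -[RHS](rowF_dd F) mulmx_sum_row; apply: eq_bigr => j _.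
by rewrite rowFE /rowF enum_valK.
Qed.

Lemma sgn_neq0 F v : sgn F v != 0.
Proof. by apply/eqP => h; have := sgn_sq F v; rewrite h mul0r => /eqP; rewrite eq_sym oner_eq0. Qed.

Section Collapse.
Variables (X Y Sg : {set {set 'I_n}}) (t : 'I_n) (k : nat).
Let Tt := [set t |: s | s in Sg].
Hypothesis cY : is_complex Y.
Hypothesis HY : forall F, (F \in Y) = [|| F \in X, F \in Sg | F \in Tt].
Hypothesis dXS : forall F, F \in X -> F \notin Sg.
Hypothesis dXT : forall F, F \in X -> F \notin Tt.
Hypothesis HS : forall s, s \in Sg -> #|s| = k /\ t \notin s.
Hypothesis Hi : forall s F, s \in Sg -> F \in Y -> #|F| = k.+1 -> s \subset F -> F = t |: s.

Lemma cardT s : s \in Sg -> #|t |: s| = k.+1.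
Proof. by move=> sS; have [c ts] := HS sS; rewrite cardsU1 ts c. Qed.

Lemma inT F : F \in Tt -> exists2 s, s \in Sg & F = t |: s.
Proof. by case/imsetP => s sS ->; exists s. Qed.

Lemma U1inj s s' : s \in Sg -> s' \in Sg -> t |: s = t |: s' -> s = s'.
Proof.
move=> sS s'S e; have [_ ts] := HS sS; have [_ ts'] := HS s'S.
by rewrite -(setU1K ts) e setU1K.
Qed.

Lemma cardTt : #|Tt| = #|Sg|.
Proof. by rewrite card_in_imset // => s s' sS s'S; apply: U1inj. Qed.

Lemma XY F : F \in X -> F \in Y.
Proof. by rewrite HY => ->. Qed.

Lemma sizeS F : F \in Sg -> #|F| = k.
Proof. by move/HS => []. Qed.

Lemma sizeT F : F \in Tt -> #|F| = k.+1.
Proof. by case/inT => s sS ->; apply: cardT. Qed.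

Lemma facesO j : j != k -> j != k.+1 -> faces Y j = faces X j.
Proof.
move=> jk jk1; apply/setP => F; rewrite !inE HY.
case: (boolP (F \in X)) => FX //=.
case: (boolP (F \in Sg)) => FS /=; first by rewrite (sizeS FS) eq_sym (negbTE jk).
case: (boolP (F \in Tt)) => FT //=; by rewrite (sizeT FT) eq_sym (negbTE jk1).
Qed.

Lemma facesK : faces Y k = faces X k :|: Sg.
Proof.
apply/setP => F; rewrite !inE HY.
case: (boolP (F \in Sg)) => FS /=; first by rewrite (sizeS FS) eqxx !orbT.
rewrite orbF; case: (boolP (F \in Tt)) => FT /=; last by rewrite orbF.
by rewrite orbT (sizeT FT) (gtn_eqF (ltnSn k)) !andbF.
Qed.

Lemma facesK1 : faces Y k.+1 = faces X k.+1 :|: Tt.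
Proof.
apply/setP => F; rewrite !inE HY.
case: (boolP (F \in Tt)) => FT /=; first by rewrite (sizeT FT) eqxx !orbT.
rewrite orbF; case: (boolP (F \in Sg)) => FS /=; last by rewrite ?orbF.
by rewrite (sizeS FS) (ltn_eqF (ltnSn k)) ?orbT !andbF ?orbF.
Qed.

Lemma TY s : s \in Sg -> t |: s \in Y.
Proof. by move=> sS; rewrite HY; apply/or3P; apply: Or33; apply: imset_f. Qed.

Lemma cU1 s : s \in Sg -> bd_coef K (t |: s) s * bd_coef K (t |: s) s = 1.
Proof.
move=> sS; have [_ ts] := HS sS.
rewrite -{2 4}(setU1K ts) bd_sgn ?setU11 //; exact: sgn_sq.
Qed.

Lemma key_sig s : s \in Sg -> (rowF s <= RS (faces X k))%MS.
Proof.
move=> sS; have [cs ts] := HS sS.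
have e := rowF_sum (t |: s); rewrite (bigD1 s) //= in e.
move/eqP: e; rewrite addr_eq0 => /eqP e.
have cnz : bd_coef K (t |: s) s != 0.
  by apply/eqP => h; have := cU1 sS; rewrite h mul0r => /eqP; rewrite eq_sym oner_eq0.
rewrite -[rowF s]scale1r -(mulVf cnz) -scalerA e; apply: scalemx_sub.
rewrite (eqmx_opp _); apply: summx_sub => G GS.
case: (eqVneq (bd_coef K (t |: s) G) 0) => [->|/bd_nz [sub cF]].
  by rewrite scale0r sub0mx.
apply: scalemx_sub; apply: RS_row.
have GY : G \in Y by apply: cY sub; apply: TY.
have cG : #|G| = k by move: cF; rewrite cardT // => -[].
move: GY; rewrite HY => /or3P[GX|GSg|GT].
- by rewrite inE GX cG eqxx.
- have := Hi GSg (TY sS) (cardT sS) sub => /(U1inj sS GSg) esG.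
  by move: GS; rewrite esG eqxx.
- by move: cG; rewrite (sizeT GT); lia.
Qed.

Lemma rank_k : \rank (RS (faces Y k)) = \rank (RS (faces X k)).
Proof.
apply/eqP; rewrite eqn_leq; apply/andP; split; apply: mxrankS; apply: RS_sub => G.
  by rewrite facesK inE => /orP[GX|GS]; [exact: RS_row | exact: key_sig].
by move=> GX; apply: RS_row; rewrite facesK inE GX.
Qed.

Lemma rank_k1 : \rank (RS (faces Y k.+1)) = (\rank (RS (faces X k.+1)) + #|Sg|)%N.
Proof.
pose MT : 'M[K]_(#|Sg|, #|{set 'I_n}|) := \matrix_(i < #|Sg|) rowF (t |: enum_val i).
pose W := (RS (faces X k.+1) + MT)%MS.
have eW : \rank (RS (faces Y k.+1)) = \rank W.
  apply/eqP; rewrite eqn_leq; apply/andP; split; apply: mxrankS.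
    apply: RS_sub => G; rewrite facesK1 inE => /orP[GX|GT].
      exact: submx_trans (RS_row GX) (addsmxSl _ _).
    have [s sS ->] := inT GT.
    apply: submx_trans (addsmxSr _ _).
    by apply: (eq_row_sub (enum_rank_in sS s)); rewrite rowK enum_rankK_in.
  rewrite addsmx_sub; apply/andP; split.
    by apply: RS_sub => G GX; apply: RS_row; rewrite facesK1 inE GX.
  apply/row_subP => i; rewrite rowK; apply: RS_row.
  by rewrite facesK1 inE; apply/orP; right; apply: imset_f; apply: enum_valP.
pose Q : 'M[K]_(#|{set 'I_n}|, #|Sg|) := \matrix_(j, i) (enum_val j == enum_val i)%:R.
have XQ : RS (faces X k.+1) *m Q = 0.
  apply/matrixP => a i; rewrite !mxE.
  under eq_bigr do rewrite !mxE enum_rankK.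
  rewrite (sum_ev (fun G => bd_coef K (enum_val a) G)).
  apply/eqP; apply: contraT => /bd_nz [sub cF].
  have := enum_valP a; rewrite inE => /andP[FX /eqP ck].
  have := Hi (enum_valP i) (XY FX) ck sub => eF.
  by have := dXT FX; rewrite eF imset_f // enum_valP.
pose c (i : 'I_#|Sg|) := bd_coef K (t |: enum_val i) (enum_val i).
have PQ : MT *m Q = \matrix_(i, i') ((i == i')%:R * c i).
  apply/matrixP => i i'; rewrite !mxE.
  under eq_bigr do rewrite !mxE enum_rankK.
  rewrite (sum_ev (fun G => bd_coef K (t |: enum_val i) G)).
  case: (eqVneq i i') => [<-|ne]; first by rewrite mul1r.
  rewrite mul0r; apply/eqP; apply: contraT => /bd_nz [sub cF].
  have := Hi (enum_valP i') (TY (enum_valP i)) (cardT (enum_valP i)) sub.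
  move/(U1inj (enum_valP i) (enum_valP i'))/enum_val_inj => e.
  by rewrite e eqxx in ne.
have PP : (MT *m Q) *m (MT *m Q) = 1%:M.
  rewrite PQ; apply/matrixP => i i''; rewrite !mxE.
  under eq_bigr do rewrite !mxE.
  under eq_bigr do rewrite [(i == _)]eq_sym -mulrA.
  rewrite (sum_pred1' i (fun x => c i * ((x == i'')%:R * c x))).
  rewrite mulrCA /c cU1 ?mulr1 //; exact: enum_valP.
have rP : (#|Sg| <= \rank (MT *m Q))%N.
  by rewrite -{1}(mxrank1 K #|Sg|) -PP mxrankM_maxl.
rewrite eW; apply/eqP; rewrite eqn_leq; apply/andP; split.
  rewrite (leq_trans (mxrank_adds_leqif _ _).1) // leq_add2l; exact: rank_leq_row.
rewrite -(mxrank_mul_ker W Q) addnC leq_add //.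
  apply: leq_trans rP _; apply: mxrankS; apply: submxMr; exact: addsmxSr.
apply: mxrankS; rewrite sub_capmx addsmxSl /=; apply/sub_kermxP; exact: XQ.
Qed.

Lemma cardUd (A B : {set {set 'I_n}}) : [disjoint A & B] -> #|A :|: B| = (#|A| + #|B|)%N.
Proof. by move=> d; apply/eqP; move: (leq_card_setU A B) => [_ ->]. Qed.

Lemma hf j : #|faces Y j| = (#|faces X j| + (j == k) * #|Sg| + (j == k.+1) * #|Sg|)%N.
Proof.
case: (eqVneq j k) => [->|jk].
  rewrite facesK cardUd ?(ltn_eqF (ltnSn k)) ?eqxx ?mul1n ?mul0n ?addn0 //.
  rewrite disjoint_subset; apply/subsetP => F; rewrite inE => /andP[FX _]; rewrite inE; exact: dXS.
case: (eqVneq j k.+1) => [->|jk1].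
  rewrite facesK1 cardUd ?(gtn_eqF (ltnSn k)) ?eqxx ?mul1n ?mul0n ?add0n ?addn0 ?cardTt //.
  rewrite disjoint_subset; apply/subsetP => F; rewrite inE => /andP[FX _]; rewrite inE; exact: dXT.
by rewrite facesO // !mul0n !addn0.
Qed.

Lemma hr j : \rank (RS (faces Y j)) = (\rank (RS (faces X j)) + (j == k.+1) * #|Sg|)%N.
Proof.
case: (eqVneq j k) => [->|jk].
  by rewrite rank_k (ltn_eqF (ltnSn k)) mul0n addn0.
case: (eqVneq j k.+1) => [->|jk1].
  by rewrite rank_k1 ?eqxx ?mul1n.
by rewrite facesO // !mul0n !addn0.
Qed.

Lemma collapse_beta i : beta Y i = beta X i.
Proof.
rewrite /beta !hr !hf.
have := rank_leq_row (RS (faces X i.+1)).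
lia.
Qed.

End Collapse.

Section ConeCollapse.
Variables (Y N0 : {set {set 'I_n}}) (t : 'I_n).
Hypothesis cY : is_complex Y.
Hypothesis NY : N0 \subset Y.
Hypothesis cX : is_complex (Y :\: N0).
Hypothesis Nt : forall S, S \in N0 -> t |: S \in N0.
Hypothesis Nt' : forall S, S \in N0 -> S :\ t \in N0.

Let w (S : {set 'I_n}) := (#|S| + (t \notin S))%N.
Let Z m := [set S in Y | (S \in N0) ==> (w S <= m)%N].

Lemma upN F G : F \in Y -> G \subset F -> G \in N0 -> F \in N0.
Proof.
move=> FY sGF GN; apply/negPn/negP => FN.
have : G \in Y :\: N0 by apply: cX sGF; rewrite inE FN.
by rewrite inE GN.
Qed.

Lemma w_mono F G : G \subset F -> (w G <= w F)%N.
Proof.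
move=> sGF; rewrite /w; case: (boolP (t \in G)) => tG.
  by rewrite (subsetP sGF _ tG) /= !addn0; apply: subset_leq_card.
case: (boolP (t \in F)) => tF /=; last by rewrite leq_add2r subset_leq_card.
rewrite addn0 addn1; apply: proper_card; rewrite properEneq sGF andbT.
by apply/eqP => e; rewrite e tF in tG.
Qed.

Lemma Zcomplex m : is_complex (Z m).
Proof.
move=> F G; rewrite !inE => /andP[FY hF] sGF; rewrite (cY FY sGF) /=.
apply/implyP => GN; have FN := upN FY sGF GN.
exact: leq_trans (w_mono sGF) (implyP hF FN).
Qed.

Lemma Z0 : Z 0 = Y :\: N0.
Proof.
apply/setP => S; rewrite !inE.
case: (S \in Y); rewrite ?andbF ?andbT //.
case: (S \in N0) => //=.
rewrite leqn0 /w addn_eq0 cards_eq0.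
case: (boolP (t \in S)) => tS; last by rewrite andbF.
by apply/negbTE; apply/nandP; left; apply/eqP => S0; rewrite S0 inE in tS.
Qed.

Lemma Zbig : Z n.+1 = Y.
Proof.
apply/setP => S; rewrite !inE.
case: (S \in Y); rewrite ?andbF ?andbT //.
apply/implyP => _; rewrite /w; have := max_card S; rewrite card_ord.
case: (t \notin S); lia.
Qed.

Lemma Zstep m i : beta (Z m.+1) i = beta (Z m) i.
Proof.
pose Sg := [set S in N0 | (t \notin S) && (#|S| == m)].
have SgN S : S \in Sg -> [/\ S \in N0, t \notin S & #|S| = m].
  by rewrite inE => /and3P[-> -> /eqP ->].
apply: (@collapse_beta (Z m) (Z m.+1) Sg t m).
- exact: Zcomplex.
- move=> F; rewrite !inE; apply/idP/idP.
    case/andP => FY hF; rewrite FY /=.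
    case: (boolP (F \in N0)) => FN /=; last by [].
    have := implyP hF FN; rewrite leq_eqVlt ltnS => /orP[/eqP wF|->//].
    case: (boolP (t \in F)) => tF.
      apply/orP; right; apply/orP; right; apply/imsetP; exists (F :\ t).
        rewrite inE Nt' //= !inE eqxx /=; move: wF; rewrite /w tF /= (cardsD1 t F) tF.
        by rewrite addn0 add1n => -[->].
      by rewrite setD1K.
    by move: wF; rewrite /w tF addn1 => -[->]; rewrite eqxx orbT.
  case/or3P => [/andP[FY hF]|FS|FT].
  - rewrite FY /=; apply/implyP => FN; exact: leqW (implyP hF FN).
  - have [FN tF cF] : [/\ F \in N0, t \notin F & #|F| = m] by case/and3P: FS => -> -> /eqP ->.
    rewrite (subsetP NY _ FN) /=.
    by apply/implyP => _; rewrite /w tF cF addn1.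
  - case/imsetP: FT => S SS ->; have [SN tS cS] := SgN _ SS.
    rewrite (subsetP NY _ (Nt SN)) /=; apply/implyP => _.
    by rewrite /w setU11 cardsU1 tS cS addn0 add1n.
- move=> F; rewrite !inE => /andP[_ hF]; apply/negP => /and3P[FN tF /eqP cF].
  by have := implyP hF FN; rewrite /w tF cF addn1 ltnn.
- move=> F; rewrite !inE => /andP[_ hF]; apply/negP => /imsetP[S SS eF].
  have [SN tS cS] := SgN _ SS.
  have FN : F \in N0 by rewrite eF; exact: Nt.
  by have := implyP hF FN; rewrite eF /w setU11 cardsU1 tS cS addn0 add1n ltnn.
- by move=> S /SgN [].
- move=> S F SS; rewrite inE => /andP[FY hF] cF sSF.
  have [SN tS cS] := SgN _ SS.
  have FN := upN FY sSF SN.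
  have wF := implyP hF FN.
  have tF : t \in F by apply/negPn/negP => tF; move: wF; rewrite /w tF cF addn1 ltnn.
  apply/esym/eqP; rewrite eqEcard cardsU1 tS cS cF add1n leqnn andbT.
  by rewrite subUset sub1set tF sSF.
Qed.

Lemma cone_collapse i : beta Y i = beta (Y :\: N0) i.
Proof.
rewrite -Z0 -{1}Zbig; elim: n.+1 => // m IH; by rewrite Zstep.
Qed.

End ConeCollapse.

Lemma facet_exists (D : {set {set 'I_n}}) G : G \in D ->
  exists2 F, F \in facets D & G \subset F.
Proof.
move=> GD.
have GP : (G \in D) && (G \subset G) by rewrite GD subxx.
case: (@arg_maxnP _ G (fun F => (F \in D) && (G \subset F)) (fun F => #|F|) GP) => F /andP[FD sGF] Fmax.
exists F => //; rewrite inE FD /=; apply/forallP => H; apply/implyP => HD.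
apply/implyP => sFH; rewrite eq_sym eqEcard sFH /=.
by apply: Fmax; rewrite HD (subset_trans sGF sFH).
Qed.

Lemma cone_char (A : {set 'I_n}) D : is_complex D ->
  cone A D = [set S | S :\: A \in D].
Proof.
move=> cD; apply/setP => S; rewrite !inE; apply/idP/idP.
  case/existsP => F /andP[]; rewrite inE => /andP[FD _] sS.
  apply: (cD _ _ FD); apply/subsetP => x; rewrite inE => /andP[xA xS].
  by move: (subsetP sS _ xS); rewrite inE (negbTE xA).
move=> SD; have [F Ff sF] := facet_exists SD.
apply/existsP; exists F; rewrite Ff /=; apply/subsetP => x xS.
rewrite inE; case: (boolP (x \in A)) => //= xA.
by apply: (subsetP sF); rewrite inE xA.
Qed.

Lemma complexD (A : {set 'I_n}) D : is_complex D -> is_complex [set S | S :\: A \in D].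
Proof. by move=> cD F G; rewrite !inE => FD sGF; apply: cD FD (setSD _ sGF). Qed.

Lemma complexU (D D' : {set {set 'I_n}}) : is_complex D -> is_complex D' -> is_complex (D :|: D').
Proof.
move=> c c' F G; rewrite !inE => /orP[FD|FD] sGF; first by rewrite (c _ _ FD sGF).
by rewrite (c' _ _ FD sGF) orbT.
Qed.

Section Main.
Variables (D1 D2 : {set {set 'I_n}}) (B : {set 'I_n}).
Hypotheses (c1 : is_complex D1) (c2 : is_complex D2).
Let V := vertex_set (D1 :|: D2).

Definition XX (T : {set 'I_n}) := [set S | S :\: T \in D1] :|: [set S | S :\: B \in D2].

Lemma XXc (T : {set 'I_n}) : is_complex (XX T).
Proof. by apply: complexU; apply: complexD. Qed.

Lemma notV s G : s \notin V -> s \in G -> G \in D1 :|: D2 -> False.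
Proof.
move=> sV sG GD; move: sV; rewrite /V /vertex_set.
by rewrite (subsetP (bigcup_sup _ GD) _ sG).
Qed.

Lemma setDU1a (a : 'I_n) (S C : {set 'I_n}) : a \in C -> (a |: S) :\: C = S :\: C.
Proof. by move=> aC; apply/setP => x; rewrite !inE; case: eqP => // ->; rewrite aC. Qed.

Lemma setD1a (a : 'I_n) (S C : {set 'I_n}) : a \in C -> (S :\ a) :\: C = S :\: C.
Proof. by move=> aC; apply/setP => x; rewrite !inE; case: eqP => // ->; rewrite aC. Qed.

Lemma setDnot (a : 'I_n) (S C : {set 'I_n}) : a \notin S -> S :\: (a |: C) = S :\: C.
Proof.
move=> aS; apply/setP => x; rewrite !inE; case: eqP => // ->.
by rewrite (negbTE aS) !andbF.
Qed.

Lemma step (T : {set 'I_n}) (s t : 'I_n) (i : nat) : s \notin T -> s \notin B -> s \notin V -> t \in T ->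
  beta (XX (s |: T)) i = beta (XX T) i.
Proof.
move=> sT sB sV tT.
pose N0 := [set S in XX (s |: T) | s \in S].
have inY S : S \in XX (s |: T) -> s \in S -> S :\: (s |: T) \in D1.
  rewrite !inE => /orP[] // SD sS; exfalso; apply: (@notV s (S :\: B) sV).
    by rewrite inE sS (negbTE sB).
  by rewrite inE SD orbT.
have eX : XX (s |: T) :\: N0 = XX T.
  apply/setP => S; rewrite !inE; case: (boolP (s \in S)) => sS /=.
    rewrite andbT andNb; apply/esym/negbTE; rewrite negb_or; apply/andP; split.
      apply/negP => SD; apply: (@notV s (S :\: T) sV); first by rewrite !inE sS sT.
      by rewrite inE SD.
    apply/negP => SD; apply: (@notV s (S :\: B) sV); first by rewrite !inE sS sB.
    by rewrite inE SD orbT.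
  by rewrite andbF /= setDnot.
rewrite -eX.
apply: (@cone_collapse _ _ t).
- exact: XXc.
- by apply/subsetP => S; rewrite inE => /andP[].
- rewrite eX; exact: XXc.
- move=> S; rewrite inE => /andP[SY sS]; rewrite inE !inE sS orbT andbT.
  by rewrite setDU1a ?inE ?tT ?orbT // inY.
- move=> S; rewrite inE => /andP[SY sS].
  have st : s != t by apply/eqP => e; rewrite e tT in sT.
  rewrite inE !inE sS st andbT.
  by rewrite setD1a ?inE ?tT ?orbT // inY.
Qed.

Definition good (S : {set 'I_n}) := forall x, x \in S -> x \notin B /\ x \notin V.

Lemma mono (i d : nat) : forall T S : {set 'I_n}, #|S :\: T| = d -> T \subset S -> T != set0 -> good S ->
  beta (XX S) i = beta (XX T) i.
Proof.
elim: d => [|d IH] T S cST sTS T0 gS.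
  have : S :\: T == set0 by rewrite -cards_eq0 cST.
  rewrite setD_eq0 => sST; suff -> : S = T by [].
  by apply/eqP; rewrite eqEsubset sST sTS.
have : S :\: T != set0 by rewrite -cards_eq0 cST.
case/set0Pn => s; rewrite inE => /andP[sT sS].
case/set0Pn: T0 => t tT.
have [sB sV] := gS s sS.
have tS' : t \in S :\ s.
  rewrite !inE (subsetP sTS _ tT) andbT; apply/eqP => e; by rewrite -e tT in sT.
rewrite -(setD1K sS) (@step (S :\ s) s t i) ?tS' ?sB ?sV ?inE ?eqxx //.
apply: (IH T).
- move: cST; rewrite (cardsD1 s) inE sT sS add1n => -[<-]; apply: eq_card => x; rewrite !inE; by case: (x == s); case: (x \in T).
- apply/subsetP => x xT; rewrite !inE (subsetP sTS _ xT) andbT.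
  by apply/eqP => e; rewrite -e xT in sT.
- by apply/set0Pn; exists t.
- by move=> x; rewrite inE => /andP[_ /gS].
Qed.

End Main.
End Bd.

Theorem corollary3p3 (n : nat) (K : fieldType)
  (D1 D2 : {set {set 'I_n}}) (A A' B : {set 'I_n}) :
  is_complex D1 -> is_complex D2 ->
  A != set0 -> A' != set0 -> B != set0 ->
  A :&: B = set0 -> A' :&: B = set0 ->
  A :&: vertex_set (D1 :|: D2) = set0 ->
  A' :&: vertex_set (D1 :|: D2) = set0 ->
  forall i : nat, (0 < i)%N ->
    red_betti K (cone A D1 :|: cone B D2) i =
    red_betti K (cone A' D1 :|: cone B D2) i.
Proof.
move=> c1 c2 A0 A'0 _ AB A'B AV A'V i _.
have eq (T : {set 'I_n}) : cone T D1 :|: cone B D2 = XX D1 D2 B T.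
  by rewrite /XX !cone_char.
rewrite !eq !betti_eq; try exact: XXc.
have gd (T : {set 'I_n}) : T :&: B = set0 -> T :&: vertex_set (D1 :|: D2) = set0 ->
    good D1 D2 B T.
  move=> TB TV x xT; split; apply/negP => xX.
    have : x \in T :&: B by rewrite inE xT xX.
    by rewrite TB inE.
  have : x \in T :&: vertex_set (D1 :|: D2) by rewrite inE xT xX.
  by rewrite TV inE.
have M (T S : {set 'I_n}) : T \subset S -> T != set0 -> good D1 D2 B S ->
    beta K (XX D1 D2 B S) i = beta K (XX D1 D2 B T) i.
  by move=> sTS T0 gS; apply: (@mono n K D1 D2 B c1 c2 i #|S :\: T|).
case/set0Pn: A0 => a aA; case/set0Pn: A'0 => a' a'A.
have gA := gd _ AB AV; have gA' := gd _ A'B A'V.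
have gaa : good D1 D2 B [set a; a'].
  by move=> x; rewrite !inE => /orP[/eqP ->|/eqP ->]; [apply: gA | apply: gA'].
have n0 x : [set x] != set0 :> {set 'I_n} by apply/set0Pn; exists x; rewrite inE.
rewrite (M [set a] A) ?sub1set //.
rewrite -(M [set a] [set a; a']) ?sub1set ?inE ?eqxx //.
rewrite (M [set a'] [set a; a']) ?sub1set ?inE ?eqxx ?orbT //.
by rewrite -(M [set a'] A') ?sub1set.
Qed.
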